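(* Let $A$ be a noetherian integral domain which is a $\mathbb{C}$-algebra, and let $a\in A$ be an irreducible element. If $A/aA$ is rigid, then the only locally nilpotent derivation $D$ of $A$ satisfying $D(a)=0$ is the zero derivation.
   Context: A locally nilpotent derivation (LND) of a $\mathbb{C}$-algebra is a $\mathbb{C}$-linear derivation $D$ such that every element is killed by some power of $D$. A ring is rigid if its only LND is zero. *)

(* Defs.v *)
From HB Require Import structures.
From mathcomp Require Import all_boot all_order all_algebra.
Set Implicit Arguments. Unset Strict Implicit. Unset Printing Implicit Defensive.
Import Order.TTheory GRing.Theory Num.Theory.
Local Open Scope ring_scope.

(* A k-algebra structure on a commutative ring R is given by a ring morphism
   iota : k -> R (the structure map).  A k-linear derivation of R: *)
Definition is_derivation (k : fieldType) (R : comPzRingType) (iota : k -> R)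
  (D : R -> R) : Prop :=
  [/\ forall x y, D (x + y) = D x + D y,
      forall (c : k) x, D (iota c * x) = iota c * D x
    & forall x y, D (x * y) = x * D y + D x * y].

Definition locally_nilpotent (R : comPzRingType) (D : R -> R) : Prop :=
  forall x, exists n : nat, iter n D x = 0.

Definition is_LND (k : fieldType) (R : comPzRingType) (iota : k -> R)
  (D : R -> R) : Prop :=
  is_derivation iota D /\ locally_nilpotent D.

Definition rigid (k : fieldType) (R : comPzRingType) (iota : k -> R) : Prop :=
  forall D : R -> R, is_LND iota D -> forall x, D x = 0.

Definition is_ideal (R : comPzRingType) (I : R -> Prop) : Prop :=
  [/\ I 0, forall x y, I x -> I y -> I (x + y)
    & forall r x, I x -> I (r * x)].

Definition noetherian (R : comPzRingType) : Prop :=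
  forall I : nat -> R -> Prop,
    (forall n, is_ideal (I n)) ->
    (forall n x, I n x -> I n.+1 x) ->
    exists N : nat, forall n x, (N <= n)%N -> I n x -> I N x.

Definition irreducible_elt (R : idomainType) (a : R) : Prop :=
  [/\ a != 0, a \isn't a GRing.unit
    & forall b c : R, a = b * c -> b \is a GRing.unit \/ c \is a GRing.unit].

(* Main.v *)
Require Import Defs.
From HB Require Import structures.
From mathcomp Require Import all_boot all_order all_algebra.
From Stdlib Require Import ClassicalEpsilon.
Import GRing.Theory Num.Theory.
Local Open Scope ring_scope.

Lemma der0 (k : fieldType) (R : comPzRingType) (iota : k -> R) (D : R -> R) :
  is_derivation iota D -> D 0 = 0.
Proof.
case=> hD _ _; have := hD 0 0; rewrite addr0 => h.
by apply: (addrI (D 0)); rewrite addr0 -h.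
Qed.

Lemma derB (k : fieldType) (R : comPzRingType) (iota : k -> R) (D : R -> R) :
  is_derivation iota D -> forall x y, D (x - y) = D x - D y.
Proof.
move=> hd x y; have h0 := @der0 _ _ _ D hd; case: hd => hD _ _.
have hN : D (- y) = - D y.
  by apply/eqP; rewrite -subr_eq0 opprK -hD addNr h0.
by rewrite hD hN.
Qed.

Lemma step (C : numClosedFieldType) (A : idomainType)
  (f : {rmorphism C -> A}) (a : A)
  (Q : comPzRingType) (pi : {rmorphism A -> Q}) :
  a != 0 ->
  (forall y : Q, exists x : A, pi x = y) ->
  (forall x : A, pi x = 0 <-> exists y : A, x = a * y) ->
  rigid (fun c : C => pi (f c)) ->
  forall E : A -> A, is_LND f E -> E a = 0 ->
  exists E' : A -> A, [/\ is_LND f E', E' a = 0 & forall x, E x = a * E' x].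
Proof.
move=> a0 hsurj hker hrig E [hder hnil] Ea.
have EaM : forall z, E (a * z) = a * E z.
  by move=> z; case: hder => _ _ ->; rewrite Ea mul0r addr0.
pose s q := proj1_sig (constructive_indefinite_description _ (hsurj q)).
have hs : forall q, pi (s q) = q.
  by move=> q; rewrite /s; case: constructive_indefinite_description.
pose Eb q := pi (E (s q)).
have Ebpi : forall x, Eb (pi x) = pi (E x).
  move=> x; rewrite /Eb; apply/eqP; rewrite -subr_eq0 -rmorphB -(@derB _ _ _ E hder).
  have [y ->] : exists y, s (pi x) - x = a * y.
    by apply/hker; rewrite rmorphB hs subrr.
  by rewrite EaM; apply/eqP/hker; exists (E y).
have hitb : forall n x, iter n Eb (pi x) = pi (iter n E x).
  by elim=> [|n IH] x //=; rewrite IH Ebpi.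
have hall : forall q, Eb q = 0.
  apply: hrig; split; last first.
    move=> q; have [x <-] := hsurj q; have [n hn] := hnil x.
    by exists n; rewrite hitb hn rmorph0.
  case: hder => hD hS hM; split.
  - move=> q1 q2; have [x1 <-] := hsurj q1; have [x2 <-] := hsurj q2.
    by rewrite -rmorphD !Ebpi hD rmorphD.
  - move=> c q; have [x <-] := hsurj q.
    by rewrite -rmorphM !Ebpi hS rmorphM.
  - move=> q1 q2; have [x1 <-] := hsurj q1; have [x2 <-] := hsurj q2.
    by rewrite -rmorphM !Ebpi hM rmorphD !rmorphM.
have hex : forall x, exists y, E x = a * y.
  by move=> x; apply/hker; rewrite -Ebpi hall.
pose E' x := proj1_sig (constructive_indefinite_description _ (hex x)).
have hE' : forall x, E x = a * E' x.
  by move=> x; rewrite /E'; case: constructive_indefinite_description.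
have canc : forall u v, a * u = a * v -> u = v by move=> u v; apply: mulfI.
have E'aM : forall z, E' (a * z) = a * E' z.
  by move=> z; apply: canc; rewrite -hE' EaM hE'.
have EanM : forall n z, E (a ^+ n * z) = a ^+ n * E z.
  by elim=> [|n IH] z; rewrite ?expr0 ?mul1r // exprS -mulrA EaM IH mulrA.
have hit : forall n x, iter n E x = a ^+ n * iter n E' x.
  elim=> [|n IH] x /=; first by rewrite expr0 mul1r.
  by rewrite IH EanM hE' exprSr mulrA.
exists E'; split => //.
- split.
  + case: hder => hD hS hM; split.
    * by move=> x y; apply: canc; rewrite -hE' hD !hE' mulrDr.
    * by move=> c x; apply: canc; rewrite -hE' hS hE' mulrCA.
    * move=> x y; apply: canc; rewrite -hE' hM !hE' mulrDr.
      by rewrite [x * (a * _)]mulrCA [a * (E' x * y)]mulrA.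
  + move=> x; have [n hn] := hnil x; exists n.
    move: hn; rewrite hit => /eqP; rewrite mulf_eq0 expf_eq0 (negbTE a0).
    by rewrite andbF => /= /eqP.
- by apply: canc; rewrite -hE' Ea mulr0.
Qed.

Theorem lemma7p1 (C : numClosedFieldType) (A : idomainType)
  (f : {rmorphism C -> A}) (a : A)
  (Q : comPzRingType) (pi : {rmorphism A -> Q}) :
  noetherian A ->
  irreducible_elt a ->
  (forall y : Q, exists x : A, pi x = y) ->
  (forall x : A, pi x = 0 <-> exists y : A, x = a * y) ->
  rigid (fun c : C => pi (f c)) ->
  forall D : A -> A, is_LND f D -> D a = 0 -> forall x, D x = 0.
Proof.
move=> hnoeth [a0 anu _] hsurj hker hrig D hD Da x.
have claim : forall k, exists Dk : A -> A,
    [/\ is_LND f Dk, Dk a = 0 & forall z, D z = a ^+ k * Dk z].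
  elim=> [|k [Dk [hk1 hk2 hk3]]].
    by exists D; split => // z; rewrite expr0 mul1r.
  have [E' [h1 h2 h3]] := @step C A f a Q pi a0 hsurj hker hrig Dk hk1 hk2.
  by exists E'; split => // z; rewrite hk3 h3 exprSr mulrA.
have yex : forall k, exists y, D x = a ^+ k * y.
  by move=> k; have [Dk [_ _ h]] := claim k; exists (Dk x).
have uniq : forall k y y', D x = a ^+ k * y -> D x = a ^+ k * y' -> y = y'.
  move=> k y y' h1 h2; apply: (mulfI (expf_neq0 k a0)); by rewrite -h1 -h2.
pose I n z := exists y r, D x = a ^+ n * y /\ z = r * y.
have [N HN] : exists N : nat, forall n z, (N <= n)%N -> I n z -> I N z.
  apply: hnoeth.
  - move=> n; split.
    + by have [y hy] := yex n; exists y, 0; rewrite mul0r.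
    + move=> u v [y [r [hy ->]]] [y' [r' [hy' ->]]].
      rewrite -(uniq _ _ _ hy hy'); by exists y, (r + r'); rewrite mulrDl.
    + move=> r u [y [r' [hy ->]]]; by exists y, (r * r'); rewrite mulrA.
  - move=> n z [y [r [hy ->]]].
    have [y' hy'] := yex n.+1.
    have eyy : y = a * y'.
      by apply: (uniq n) => //; rewrite hy' exprSr mulrA.
    by exists y', (r * a); rewrite eyy mulrA.
have [y1 hy1] := yex N.+1.
have [y [r [hy e]]] : I N y1 by apply: (HN N.+1) => //; exists y1, 1; rewrite mul1r.
have eyy : y = a * y1 by apply: (uniq N) => //; rewrite hy1 exprSr mulrA.
have : y1 * (1 - r * a) = 0.
  by rewrite mulrBr mulr1 mulrC -mulrA -eyy -e subrr.
move/eqP; rewrite mulf_eq0 => /orP [/eqP y10|].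
  by rewrite hy1 y10 mulr0.
rewrite subr_eq0 => /eqP h; exfalso; move/negP: anu; apply.
by apply/unitrP; exists r; rewrite [a * r]mulrC -h.
Qed.
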